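(* $N\otimes-$ is a functor on $\mathsf{SquaMS}$: for every square metric space $X$, the quotient distance on $N\otimes X$ is a metric, $(N\otimes X,S_{N\otimes X})$ is a square metric space, and for every morphism $f$ of $\mathsf{SquaMS}$, $N\otimes f$ is a morphism of $\mathsf{SquaMS}$, with identities and composition preserved.
   Context: Let $M_0=\{(r,s)\in[0,1]^2: r\in\{0,1\}\text{ or } s\in\{0,1\}\}$. A square metric space is a pair $(X,S_X)$ with $X$ a metric space with all distances at most $2$ and $S_X\colon M_0\to X$ injective such that (sq1) for $i\in\{0,1\}$, $r,s\in[0,1]$: $d_X(S_X(i,r),S_X(i,s))=|s-r|$ and $d_X(S_X(r,i),S_X(s,i))=|s-r|$; (sq2) $d_X(S_X(r,s),S_X(t,u))\ge|r-t|+|s-u|$. $\mathsf{SquaMS}$: these objects, with short maps $f$ satisfying $f\circ S_X=S_Y$ as morphisms. Let $N=\{0,1,2\}^2$, also viewed as points of $\mathbb{R}^2$. For $X$ in $\mathsf{SquaMS}$, $N\otimes X=(N\times X)/\!\sim$, where $\sim$ is the equivalence relation generated by $(m,S_X(p))\sim(n,S_X(q))$ whenever $m,n\in N$ differ by exactly $1$ in exactly one coordinate and $(m+p)/3=(n+q)/3$ in $\mathbb{R}^2$; $n\otimes x$ is the class of $(n,x)$. On $N\times X$ put $d((a,u),(b,v))=\frac13 d_X(u,v)$ if $a=b$ and $2$ otherwise; the quotient distance is the infimum over finite sequences from $(m,x)$ to $(n,y)$ in $N\times X$ of the sum over consecutive pairs of $0$ if $\sim$-related and the distance otherwise. $S_{N\otimes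 X}(p)=n\otimes S_X(3p-n)$ for any $n\in N$ with $p\in(n+[0,1]^2)/3$, and $(N\otimes f)(n\otimes x)=n\otimes f(x)$. *)

(* Defs.v *)
From Stdlib Require Import Reals Lra List Relations.
From Stdlib Require Import ClassicalEpsilon.
From Coquelicot Require Import Coquelicot.
Open Scope R_scope.

Definition M0 (p : R * R) : Prop :=
  0 <= fst p <= 1 /\ 0 <= snd p <= 1 /\
  (fst p = 0 \/ fst p = 1 \/ snd p = 0 \/ snd p = 1).

(* ---------- metric and square-metric structure on a type T modulo an
   equivalence E (E = eq for genuine types, E = ~ for the quotient) ---------- *)
Definition is_metric_on {T : Type} (E : T -> T -> Prop) (d : T -> T -> R) : Prop :=
  (forall a a' b b', E a a' -> E b b' -> d a b = d a' b') /\
  (forall a b, 0 <= d a b) /\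
  (forall a b, d a b = 0 <-> E a b) /\
  (forall a b, d a b = d b a) /\
  (forall a b c, d a c <= d a b + d b c).

(* S : M0 -> T is modelled as a total function R*R -> T of which only the
   values on M0 matter. *)
Definition is_square_metric {T : Type} (E : T -> T -> Prop) (d : T -> T -> R)
    (S : R * R -> T) : Prop :=
  is_metric_on E d /\
  (forall a b, d a b <= 2) /\
  (forall p q, M0 p -> M0 q -> E (S p) (S q) -> p = q) /\
  (forall i r s, (i = 0 \/ i = 1) -> 0 <= r <= 1 -> 0 <= s <= 1 ->
     d (S (i, r)) (S (i, s)) = Rabs (s - r) /\
     d (S (r, i)) (S (s, i)) = Rabs (s - r)) /\
  (forall r s t u, M0 (r, s) -> M0 (t, u) ->
     d (S (r, s)) (S (t, u)) >= Rabs (r - t) + Rabs (s - u)).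

Definition is_morphism_on {T U : Type} (ET : T -> T -> Prop) (EU : U -> U -> Prop)
    (dT : T -> T -> R) (dU : U -> U -> R) (ST : R * R -> T) (SU : R * R -> U)
    (f : T -> U) : Prop :=
  (forall a b, ET a b -> EU (f a) (f b)) /\
  (forall a b, dU (f a) (f b) <= dT a b) /\
  (forall p, M0 p -> EU (f (ST p)) (SU p)).

Record SqMS := {
  car :> Type;
  dist : car -> car -> R;
  sqS : R * R -> car;
  sq_ok : is_square_metric (@eq car) dist sqS
}.

Definition is_morphism (X Y : SqMS) (f : car X -> car Y) : Prop :=
  is_morphism_on (@eq (car X)) (@eq (car Y)) (dist X) (dist Y) (sqS X) (sqS Y) f.

Inductive three : Type := t0 | t1 | t2.
Definition vt (t : three) : R := match t with t0 => 0 | t1 => 1 | t2 => 2 end.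
Definition NN : Type := (three * three)%type.
Definition vN1 (n : NN) : R := vt (fst n).
Definition vN2 (n : NN) : R := vt (snd n).

Definition N_eq_dec (m n : NN) : {m = n} + {m <> n}.
Proof. decide equality; decide equality. Defined.

Definition adjN (m n : NN) : Prop :=
  (fst m = fst n /\ Rabs (vN2 m - vN2 n) = 1) \/
  (snd m = snd n /\ Rabs (vN1 m - vN1 n) = 1).

Definition in_cell (n : NN) (p : R * R) : Prop :=
  vN1 n / 3 <= fst p <= (vN1 n + 1) / 3 /\ vN2 n / 3 <= snd p <= (vN2 n + 1) / 3.

Definition rescale (n : NN) (p : R * R) : R * R :=
  (3 * fst p - vN1 n, 3 * snd p - vN2 n).

Section Tensor.
Variable X : SqMS.

Definition TP : Type := (NN * car X)%type.

Definition tgen (a b : TP) : Prop :=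
  exists m n p q, M0 p /\ M0 q /\ adjN m n /\
    a = (m, sqS X p) /\ b = (n, sqS X q) /\
    (vN1 m + fst p) / 3 = (vN1 n + fst q) / 3 /\
    (vN2 m + snd p) / 3 = (vN2 n + snd q) / 3.

Definition trel : TP -> TP -> Prop := clos_refl_sym_trans TP tgen.

Definition base_d (a b : TP) : R :=
  if N_eq_dec (fst a) (fst b) then dist X (snd a) (snd b) / 3 else 2.

Definition step_cost (a b : TP) : R :=
  if excluded_middle_informative (trel a b) then 0 else base_d a b.

Fixpoint chain_cost (a : TP) (l : list TP) : R :=
  match l with
  | nil => 0
  | x :: l' => step_cost a x + chain_cost x l'
  end.

Definition tdist (a b : TP) : R :=
  real (Glb_Rbar (fun r => exists l, last l a = b /\ r = chain_cost a l)).

Definition cell3 (r : R) : three :=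
  if Rle_dec r (1/3) then t0 else if Rle_dec r (2/3) then t1 else t2.
Definition cellN (p : R * R) : NN := (cell3 (fst p), cell3 (snd p)).

Definition tS (p : R * R) : TP := (cellN p, sqS X (rescale (cellN p) p)).

End Tensor.

Definition tmap {X Y : SqMS} (f : car X -> car Y) (a : TP X) : TP Y :=
  (fst a, f (snd a)).

(* Main.v *)
From Stdlib Require Import Reals Lra List Relations Classical.
From Stdlib Require Import ClassicalEpsilon.
From Coquelicot Require Import Coquelicot.
Require Import Defs.
Open Scope R_scope.

Section Basic.
Variable X : SqMS.
Notation d := (Defs.dist X).
Notation S := (sqS X).

Lemma d_nonneg a b : 0 <= d a b.
Proof. destruct (sq_ok X) as [[_ [H _]] _]; apply H. Qed.
Lemma d_sym a b : d a b = d b a.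
Proof. destruct (sq_ok X) as [[_ [_ [_ [H _]]]] _]; apply H. Qed.
Lemma d_tri a b c : d a c <= d a b + d b c.
Proof. destruct (sq_ok X) as [[_ [_ [_ [_ H]]]] _]; apply H. Qed.
Lemma d_refl a : d a a = 0.
Proof. destruct (sq_ok X) as [[_ [_ [H _]]] _]; apply H; reflexivity. Qed.
Lemma d_eq0 a b : d a b = 0 -> a = b.
Proof. destruct (sq_ok X) as [[_ [_ [H _]]] _]; apply H. Qed.
Lemma d_le2 a b : d a b <= 2.
Proof. destruct (sq_ok X) as [_ [H _]]; apply H. Qed.
Lemma S_inj p q : M0 p -> M0 q -> S p = S q -> p = q.
Proof. destruct (sq_ok X) as [_ [_ [H _]]]; apply H. Qed.
Lemma sq1X i r s : (i = 0 \/ i = 1) -> 0 <= r <= 1 -> 0 <= s <= 1 ->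
     d (S (i, r)) (S (i, s)) = Rabs (s - r) /\
     d (S (r, i)) (S (s, i)) = Rabs (s - r).
Proof. destruct (sq_ok X) as [_ [_ [_ [H _]]]]; apply H. Qed.
Lemma sq2X p q : M0 p -> M0 q -> Rabs (fst p - fst q) + Rabs (snd p - snd q) <= d (S p) (S q).
Proof. destruct (sq_ok X) as [_ [_ [_ [_ H]]]]; destruct p, q; intros; apply Rge_le, H; auto. Qed.

End Basic.

Lemma vt_range t : 0 <= vt t <= 2.
Proof. destruct t; simpl; lra. Qed.
Lemma vt_inj t t' : vt t = vt t' -> t = t'.
Proof. destruct t, t'; simpl; intros; auto; lra. Qed.
Lemma vt_neq t t' : t <> t' -> 1 <= Rabs (vt t - vt t').
Proof.
  destruct t, t'; simpl; intros H; try (exfalso; now apply H);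
  [rewrite Rabs_left | rewrite Rabs_left | rewrite Rabs_right | rewrite Rabs_left
  | rewrite Rabs_right | rewrite Rabs_right]; lra.
Qed.
Lemma vt_int t : vt t = 0 \/ vt t = 1 \/ vt t = 2.
Proof. destruct t; simpl; auto. Qed.

Lemma R_tri a b c : Rabs (a - c) <= Rabs (a - b) + Rabs (b - c).
Proof. replace (a - c) with ((a - b) + (b - c)) by ring. apply Rabs_triang. Qed.
Lemma Rabs_third x : Rabs (x / 3) = Rabs x / 3.
Proof. rewrite Rabs_div by lra. rewrite (Rabs_pos_eq 3) by lra. reflexivity. Qed.

Lemma M0_range p : M0 p -> 0 <= fst p <= 1 /\ 0 <= snd p <= 1.
Proof. unfold M0; tauto. Qed.

Definition P1 (m : NN) (p : R * R) := (vN1 m + fst p) / 3.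
Definition P2 (m : NN) (p : R * R) := (vN2 m + snd p) / 3.
Definition L1 m p n q := Rabs (P1 m p - P1 n q) + Rabs (P2 m p - P2 n q).

Lemma L1_tri m p n q k r : L1 m p n q <= L1 m p k r + L1 k r n q.
Proof. unfold L1. pose proof (R_tri (P1 m p) (P1 k r) (P1 n q)).
  pose proof (R_tri (P2 m p) (P2 k r) (P2 n q)). lra. Qed.
Lemma L1_same m p q : L1 m p m q = (Rabs (fst p - fst q) + Rabs (snd p - snd q)) / 3.
Proof. unfold L1, P1, P2.
  replace ((vN1 m + fst p) / 3 - (vN1 m + fst q) / 3) with ((fst p - fst q)/3) by field.
  replace ((vN2 m + snd p) / 3 - (vN2 m + snd q) / 3) with ((snd p - snd q)/3) by field.
  rewrite !Rabs_third. field. Qed.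
Lemma L1_nonneg m p n q : 0 <= L1 m p n q.
Proof. unfold L1. pose proof (Rabs_pos (P1 m p - P1 n q)). pose proof (Rabs_pos (P2 m p - P2 n q)). lra. Qed.
Lemma L1_le2 m p n q : M0 p -> M0 q -> L1 m p n q <= 2.
Proof. intros Hp Hq. apply M0_range in Hp. apply M0_range in Hq.
  unfold L1, P1, P2, vN1, vN2.
  pose proof (vt_range (fst m)). pose proof (vt_range (fst n)).
  pose proof (vt_range (snd m)). pose proof (vt_range (snd n)).
  assert (Rabs ((vt (fst m) + fst p) / 3 - (vt (fst n) + fst q) / 3) <= 1) by (apply Rabs_le; lra).
  assert (Rabs ((vt (snd m) + snd p) / 3 - (vt (snd n) + snd q) / 3) <= 1) by (apply Rabs_le; lra).
  lra. Qed.
Lemma L1_zero m p n q : L1 m p n q = 0 -> P1 m p = P1 n q /\ P2 m p = P2 n q.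
Proof. unfold L1. intros H.
  pose proof (Rabs_pos (P1 m p - P1 n q)). pose proof (Rabs_pos (P2 m p - P2 n q)).
  split; apply Rminus_diag_uniq, Rabs_eq_0; lra. Qed.

Section Glue.
Variable X : SqMS.
Notation d := (Defs.dist X).
Notation S := (sqS X).

Lemma abs1 a b x y : 0 <= x <= 1 -> 0 <= y <= 1 -> a + x = b + y -> 1 <= Rabs (a - b) -> Rabs (a - b) = 1.
Proof. intros. apply Rle_antisym; auto. apply Rabs_le. lra. Qed.

Lemma tgen_mk m n p q : M0 p -> M0 q -> adjN m n -> P1 m p = P1 n q -> P2 m p = P2 n q ->
  trel X (m, S p) (n, S q).
Proof. intros. apply rst_step. exists m, n, p, q. unfold P1, P2 in *. tauto. Qed.

Lemma glue m n p q : M0 p -> M0 q -> P1 m p = P1 n q -> P2 m p = P2 n q ->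
  trel X (m, S p) (n, S q).
Proof.
  intros Hp Hq H1 H2.
  pose proof (M0_range _ Hp) as Rp. pose proof (M0_range _ Hq) as Rq.
  unfold P1, P2, vN1, vN2 in H1, H2.
  destruct m as [m1 m2], n as [n1 n2]; simpl in *.
  destruct (classic (m1 = n1)) as [E1|E1]; destruct (classic (m2 = n2)) as [E2|E2].
  - subst. assert (p = q). { destruct p, q; simpl in *; f_equal; lra. } subst. apply rst_refl.
  - subst. apply tgen_mk; auto; unfold P1, P2, vN1, vN2; simpl; try lra.
    left. split; auto. unfold vN2; simpl. apply (abs1 _ _ (snd p) (snd q)); try tauto; try lra.
    apply vt_neq; auto.
  - subst. apply tgen_mk; auto; unfold P1, P2, vN1, vN2; simpl; try lra.
    right. split; auto. unfold vN1; simpl. apply (abs1 _ _ (fst p) (fst q)); try tauto; try lra.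
    apply vt_neq; auto.
  - assert (A1 : Rabs (vt m1 - vt n1) = 1).
    { apply (abs1 _ _ (fst p) (fst q)); try tauto; try lra. apply vt_neq; auto. }
    assert (A2 : Rabs (vt m2 - vt n2) = 1).
    { apply (abs1 _ _ (snd p) (snd q)); try tauto; try lra. apply vt_neq; auto. }
    assert (Hr : M0 (fst q, snd p)).
    { unfold M0; simpl. repeat split; try tauto.
      destruct (Rcase_abs (vt m1 - vt n1)).
      - rewrite Rabs_left in A1 by lra. left. lra.
      - rewrite Rabs_right in A1 by lra. right. left. lra. }
    apply rst_trans with ((n1, m2), S (fst q, snd p)).
    + apply tgen_mk; auto; unfold P1, P2, vN1, vN2; simpl; try lra.
      right. split; auto.
    + apply tgen_mk; auto; unfold P1, P2, vN1, vN2; simpl; try lra.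
      left. split; auto.
Qed.

Definition RI (a b : TP X) : Prop :=
  a = b \/ exists m n p q, M0 p /\ M0 q /\ a = (m, S p) /\ b = (n, S q) /\
     P1 m p = P1 n q /\ P2 m p = P2 n q.

Lemma trel_inv a b : trel X a b -> RI a b.
Proof.
  induction 1 as [a b H|a|a b H IH|a b c H1 IH1 H2 IH2].
  - right. destruct H as (m & n & p & q & Hp & Hq & _ & -> & -> & E1 & E2).
    exists m, n, p, q. unfold P1, P2. tauto.
  - left; auto.
  - destruct IH as [->|(m & n & p & q & Hp & Hq & -> & -> & E1 & E2)].
    + left; auto.
    + right. exists n, m, q, p. auto 10.
  - destruct IH1 as [->|(m & n & p & q & Hp & Hq & -> & -> & E1 & E2)]; auto.
    destruct IH2 as [<-|(m' & n' & p' & q' & Hp' & Hq' & E & -> & E1' & E2')].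
    + right. exists m, n, p, q. tauto.
    + injection E; intros Es Em. apply S_inj in Es; auto. subst.
      right. exists m, n', p, q'. split; [|split]; auto. split; [|split]; auto. split; congruence.
Qed.

Lemma trel_sym a b : trel X a b -> trel X b a.
Proof. apply rst_sym. Qed.
Lemma trel_trans a b c : trel X a b -> trel X b c -> trel X a c.
Proof. apply rst_trans. Qed.

End Glue.

Lemma last_ne {A} (y : A) l d d' : last (y :: l) d = last (y :: l) d'.
Proof. revert y; induction l as [|z l IH]; intros y; simpl; auto.
  specialize (IH z). simpl in IH. destruct l; auto. Qed.
Lemma last_cons {A} (x : A) l d : last (x :: l) d = last l x.
Proof. destruct l as [|y l]; simpl; auto.
  pose proof (last_ne y l d x) as H. simpl in H. destruct l; auto. Qed.

Lemma last_app {A} (l1 l2 : list A) d : last (l1 ++ l2) d = last l2 (last l1 d).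
Proof. revert d; induction l1 as [|x l1 IH]; intros d; [reflexivity|].
  change ((x :: l1) ++ l2) with (x :: (l1 ++ l2)). rewrite !last_cons. apply IH. Qed.

Section Dist.
Variable X : SqMS.
Notation d := (Defs.dist X).
Notation S := (sqS X).

Definition CS (a b : TP X) := fun r => exists l, last l a = b /\ r = chain_cost X a l.

Lemma base_nonneg a b : 0 <= base_d X a b.
Proof. unfold base_d. destruct N_eq_dec; [pose proof (d_nonneg X (snd a) (snd b)); lra | lra]. Qed.
Lemma base_le2 a b : base_d X a b <= 2.
Proof. unfold base_d. destruct N_eq_dec; [pose proof (d_le2 X (snd a) (snd b)); lra | lra]. Qed.
Lemma step_nonneg a b : 0 <= step_cost X a b.
Proof. unfold step_cost. destruct excluded_middle_informative; [lra|apply base_nonneg]. Qed.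
Lemma step_le_base a b : step_cost X a b <= base_d X a b.
Proof. unfold step_cost. destruct excluded_middle_informative; [apply base_nonneg|lra]. Qed.
Lemma step_trel a b : trel X a b -> step_cost X a b = 0.
Proof. unfold step_cost. destruct excluded_middle_informative; tauto. Qed.
Lemma chain_nonneg a l : 0 <= chain_cost X a l.
Proof. revert a; induction l; intros; simpl; [lra|]. pose proof (step_nonneg a0 a); pose proof (IHl a); lra. Qed.

Lemma chain_app a l1 l2 : chain_cost X a (l1 ++ l2) = chain_cost X a l1 + chain_cost X (last l1 a) l2.
Proof. revert a; induction l1 as [|x l1 IH]; intros a; [simpl; lra|].
  change ((x :: l1) ++ l2) with (x :: (l1 ++ l2)). cbn [chain_cost].
  rewrite IH, last_cons. lra. Qed.

Lemma tdist_spec a b : (forall r, CS a b r -> tdist X a b <= r) /\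
  (forall K, (forall r, CS a b r -> K <= r) -> K <= tdist X a b).
Proof.
  unfold tdist. change (fun r => exists l, last l a = b /\ r = chain_cost X a l) with (CS a b).
  pose proof (Glb_Rbar_correct (CS a b)) as [Hlb Hglb].
  assert (e0 : CS a b (chain_cost X a (b :: nil))) by (exists (b :: nil); simpl; auto).
  assert (H0 : Rbar_le (Finite 0) (Glb_Rbar (CS a b))).
  { apply Hglb. intros r [l [_ ->]]. simpl. apply chain_nonneg. }
  destruct (Glb_Rbar (CS a b)) as [g| |]; simpl in *.
  - split.
    + intros r Hr. apply (Hlb r Hr).
    + intros K HK. apply (Hglb (Finite K)). intros r Hr. apply HK; auto.
  - exfalso. apply (Hlb _ e0).
  - exfalso. exact H0.
Qed.

Lemma tdist_le a b l : last l a = b -> tdist X a b <= chain_cost X a l.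
Proof. intros; apply (proj1 (tdist_spec a b)); exists l; auto. Qed.
Lemma tdist_ge a b K : (forall l, last l a = b -> K <= chain_cost X a l) -> K <= tdist X a b.
Proof. intros H; apply (proj2 (tdist_spec a b)). intros r [l [E ->]]; auto. Qed.

Lemma tdist_nonneg a b : 0 <= tdist X a b.
Proof. apply tdist_ge. intros; apply chain_nonneg. Qed.
Lemma tdist_le_base a b : tdist X a b <= base_d X a b.
Proof. eapply Rle_trans. apply (tdist_le a b (b :: nil)); auto. simpl.
  pose proof (step_le_base a b); lra. Qed.
Lemma tdist_le2 a b : tdist X a b <= 2.
Proof. eapply Rle_trans; [apply tdist_le_base|apply base_le2]. Qed.
Lemma tdist_trel a b : trel X a b -> tdist X a b = 0.
Proof. intros H. apply Rle_antisym; [|apply tdist_nonneg].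
  eapply Rle_trans. apply (tdist_le a b (b :: nil)); auto. simpl. rewrite step_trel; auto; lra. Qed.

Lemma tdist_tri a b c : tdist X a c <= tdist X a b + tdist X b c.
Proof.
  assert (tdist X a c - tdist X b c <= tdist X a b); [|lra].
  apply tdist_ge. intros l1 E1.
  assert (tdist X a c - chain_cost X a l1 <= tdist X b c); [|lra].
  apply tdist_ge. intros l2 E2.
  assert (tdist X a c <= chain_cost X a (l1 ++ l2)).
  { apply tdist_le. rewrite last_app, E1; auto. }
  rewrite chain_app, E1 in H. lra.
Qed.

Lemma step_sym a b : step_cost X a b = step_cost X b a.
Proof. unfold step_cost.
  destruct (excluded_middle_informative (trel X a b)), (excluded_middle_informative (trel X b a)); auto.
  - exfalso; apply n; apply trel_sym; auto.
  - exfalso; apply n; apply trel_sym; auto.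
  - unfold base_d. destruct (N_eq_dec (fst a) (fst b)), (N_eq_dec (fst b) (fst a)); auto.
    + rewrite d_sym; auto.
    + congruence.
    + congruence.
Qed.

Lemma chain_rev a l : exists l', last l' (last l a) = a /\ chain_cost X (last l a) l' = chain_cost X a l.
Proof. revert a; induction l as [|x l IH]; intros a.
  - exists nil; simpl; auto.
  - destruct (IH x) as [l' [E C]]. rewrite last_cons. exists (l' ++ a :: nil).
    split. rewrite last_app; auto.
    rewrite chain_app, E. simpl. rewrite C, step_sym. lra.
Qed.

Lemma tdist_sym_le a b : tdist X b a <= tdist X a b.
Proof. apply tdist_ge. intros l E. destruct (chain_rev a l) as [l' [E' C]].
  rewrite E in E', C. rewrite <- C. apply tdist_le; auto. Qed.
Lemma tdist_sym a b : tdist X a b = tdist X b a.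
Proof. apply Rle_antisym; apply tdist_sym_le. Qed.

Lemma tdist_wd a a' b b' : trel X a a' -> trel X b b' -> tdist X a b = tdist X a' b'.
Proof. intros Ha Hb.
  pose proof (tdist_trel _ _ Ha). pose proof (tdist_trel _ _ Hb).
  pose proof (tdist_trel _ _ (trel_sym _ _ _ Ha)). pose proof (tdist_trel _ _ (trel_sym _ _ _ Hb)).
  pose proof (tdist_tri a a' b). pose proof (tdist_tri a' b b').
  pose proof (tdist_tri a' a b). pose proof (tdist_tri a b' b).
  pose proof (tdist_tri a b b'). pose proof (tdist_tri a' a b').
  pose proof (tdist_tri a' b' b).
  lra. Qed.

End Dist.

Lemma L1_eq m p n q k r : P1 m p = P1 n q -> P2 m p = P2 n q -> L1 m p k r = L1 n q k r.
Proof. intros E1 E2; unfold L1; rewrite E1, E2; auto. Qed.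
Lemma L1_refl n q : L1 n q n q = 0.
Proof. rewrite L1_same. rewrite !Rminus_diag, Rabs_R0. lra. Qed.

Section Chain.
Variable X : SqMS.
Notation d := (Defs.dist X).
Notation S := (sqS X).

Lemma chain_lb l : forall a, chain_cost X a l < 2 ->
 (fst a = fst (last l a) /\ d (snd a) (snd (last l a)) / 3 <= chain_cost X a l) \/
 (exists p q, M0 p /\ M0 q /\
   d (snd a) (S p) / 3 + L1 (fst a) p (fst (last l a)) q + d (S q) (snd (last l a)) / 3
     <= chain_cost X a l).
Proof.
  induction l as [|x l IH]; intros a Hc.
  - left. simpl. split; [auto|rewrite d_refl; lra].
  - rewrite last_cons. cbn [chain_cost] in *.
    pose proof (step_nonneg X a x). pose proof (chain_nonneg X x l).
    specialize (IH x ltac:(lra)).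
    set (b := last l x) in *.
    unfold step_cost in *. destruct excluded_middle_informative as [Ht|Ht].
    + destruct (trel_inv X a x Ht) as [<-|(m & n & p0 & q0 & Hp0 & Hq0 & -> & -> & E1 & E2)].
      * rewrite Rplus_0_l; exact IH.
      * simpl in IH |- *. right. pose proof (d_refl X (S p0)).
        destruct IH as [[Ef Ed] | (p & q & Hp & Hq & Hle)].
        -- exists p0, q0. split; auto; split; auto.
           rewrite (L1_eq m p0 n q0 _ _ E1 E2), <- Ef, L1_refl. lra.
        -- exists p0, q. split; auto; split; auto.
           rewrite (L1_eq m p0 n q0 _ _ E1 E2).
           pose proof (L1_tri n q0 (fst b) q n p) as HT.
           rewrite L1_same in HT. pose proof (sq2X X q0 p Hq0 Hp). lra.
    + unfold base_d in *. destruct N_eq_dec as [Ef|Ef]; [|lra].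
      destruct IH as [[Ef2 Ed] | (p & q & Hp & Hq & Hle)].
      * left. split; [congruence|].
        pose proof (d_tri X (snd a) (snd x) (snd b)). lra.
      * right. exists p, q. split; auto; split; auto. rewrite Ef.
        pose proof (d_tri X (snd a) (snd x) (S p)). lra.
Qed.

Lemma pos_lb m n p0 q0 : M0 p0 -> M0 q0 ->
  L1 m p0 n q0 <= tdist X (m, S p0) (n, S q0).
Proof.
  intros Hp0 Hq0. apply tdist_ge. intros l E.
  destruct (Rlt_le_dec (chain_cost X (m, S p0) l) 2) as [Hc|Hc];
    [|pose proof (L1_le2 m p0 n q0 Hp0 Hq0); lra].
  destruct (chain_lb l _ Hc) as [[Ef Ed] | (p & q & Hp & Hq & Hle)]; rewrite E in *; simpl in *.
  - subst. rewrite L1_same. pose proof (sq2X X p0 q0 Hp0 Hq0). lra.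
  - pose proof (L1_tri m p0 n q0 m p). pose proof (L1_tri m p n q0 n q).
    rewrite L1_same in H, H0. pose proof (sq2X X p0 p Hp0 Hp). pose proof (sq2X X q q0 Hq Hq0).
    lra.
Qed.

End Chain.

Definition clamp (r : R) := Rmax 0 (Rmin 1 r).
Lemma clamp_lip r s : Rabs (clamp r - clamp s) <= Rabs (r - s).
Proof. unfold clamp, Rmax, Rmin.
  destruct (Rcase_abs (r - s)); [rewrite (Rabs_left (r - s)) by lra | rewrite (Rabs_right (r - s)) by lra];
  repeat destruct Rle_dec; apply Rabs_le; lra. Qed.
Lemma clamp_id r : 0 <= r <= 1 -> clamp r = r.
Proof. intros. unfold clamp, Rmax, Rmin. repeat destruct Rle_dec; lra. Qed.

Lemma lip_cont f : (forall r s, Rabs (f r - f s) <= Rabs (r - s)) -> forall c, continuity_pt f c.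
Proof.
  intros H c. unfold continuity_pt, continue_in, limit1_in, limit_in.
  intros eps Heps. exists eps. split; auto. intros x [_ Hx]. simpl in *. unfold R_dist in *.
  eapply Rle_lt_trans; [apply H|]; auto.
Qed.

Lemma M0_dec p : M0 p -> exists t, 0 <= t <= 1 /\
  (p = (0, t) \/ p = (1, t) \/ p = (t, 0) \/ p = (t, 1)).
Proof. destruct p as [a b]. unfold M0; simpl. intros (Ha & Hb & [ -> | [ -> | [ -> | -> ]]]).
  - exists b; auto.
  - exists b; auto.
  - exists a; auto 10.
  - exists a; auto 10.
Qed.

Section Bnd.
Variable X : SqMS.
Notation d := (Defs.dist X).
Notation S := (sqS X).

Lemma d_lip x u v : Rabs (d x u - d x v) <= d u v.
Proof. pose proof (d_tri X x u v). pose proof (d_tri X x v u). rewrite (d_sym X v u) in H0.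
  apply Rabs_le; lra. Qed.

Lemma min_edge (g : R -> car X) x :
  (forall r s, 0 <= r <= 1 -> 0 <= s <= 1 -> d (g r) (g s) <= Rabs (r - s)) ->
  exists r0, 0 <= r0 <= 1 /\ forall r, 0 <= r <= 1 -> d x (g r0) <= d x (g r).
Proof.
  intros Hg.
  set (f := fun r => d x (g (clamp r))).
  assert (Hc : forall r, 0 <= clamp r <= 1).
  { intros r; unfold clamp, Rmax, Rmin; repeat destruct Rle_dec; lra. }
  assert (Hl : forall r s, Rabs (f r - f s) <= Rabs (r - s)).
  { intros r s. unfold f. eapply Rle_trans; [apply d_lip|].
    eapply Rle_trans; [apply Hg; auto|apply clamp_lip]. }
  destruct (continuity_ab_min f 0 1 ltac:(lra) (fun c _ => lip_cont f Hl c)) as [r0 [H1 H2]].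
  exists r0. split; auto. intros r Hr. specialize (H1 r Hr). unfold f in H1.
  rewrite !clamp_id in H1; auto.
Qed.

Lemma edge_lip (e : R -> R * R) :
  (forall r s, 0 <= r <= 1 -> 0 <= s <= 1 -> d (S (e r)) (S (e s)) = Rabs (s - r)) ->
  forall r s, 0 <= r <= 1 -> 0 <= s <= 1 -> d (S (e r)) (S (e s)) <= Rabs (r - s).
Proof. intros H r s Hr Hs. rewrite H, Rabs_minus_sym; auto; lra. Qed.

Lemma bnd x : (exists p, M0 p /\ x = S p) \/
  (exists del, 0 < del /\ forall p, M0 p -> del <= d x (S p)).
Proof.
  destruct (min_edge (fun t => S (0, t)) x) as [r0 [R0 H0]].
  { apply (edge_lip (fun t => (0, t))). intros; apply (sq1X X 0); auto. }
  destruct (min_edge (fun t => S (1, t)) x) as [r1 [R1 H1]].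
  { apply (edge_lip (fun t => (1, t))). intros; apply (sq1X X 1); auto. }
  destruct (min_edge (fun t => S (t, 0)) x) as [r2 [R2 H2]].
  { apply (edge_lip (fun t => (t, 0))). intros; apply (sq1X X 0); auto. }
  destruct (min_edge (fun t => S (t, 1)) x) as [r3 [R3 H3]].
  { apply (edge_lip (fun t => (t, 1))). intros; apply (sq1X X 1); auto. }
  destruct (Req_dec (d x (S (0, r0))) 0) as [Z|Z0].
  { left. exists (0, r0). split; [unfold M0; simpl; repeat split; lra|]. apply d_eq0 in Z; auto. }
  destruct (Req_dec (d x (S (1, r1))) 0) as [Z|Z1].
  { left. exists (1, r1). split; [unfold M0; simpl; repeat split; lra|]. apply d_eq0 in Z; auto. }
  destruct (Req_dec (d x (S (r2, 0))) 0) as [Z|Z2].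
  { left. exists (r2, 0). split; [unfold M0; simpl; repeat split; lra|]. apply d_eq0 in Z; auto. }
  destruct (Req_dec (d x (S (r3, 1))) 0) as [Z|Z3].
  { left. exists (r3, 1). split; [unfold M0; simpl; repeat split; lra|]. apply d_eq0 in Z; auto. }
  right.
  pose proof (d_nonneg X x (S (0, r0))). pose proof (d_nonneg X x (S (1, r1))).
  pose proof (d_nonneg X x (S (r2, 0))). pose proof (d_nonneg X x (S (r3, 1))).
  exists (Rmin (Rmin (d x (S (0, r0))) (d x (S (1, r1)))) (Rmin (d x (S (r2, 0))) (d x (S (r3, 1))))).
  split.
  - repeat apply Rmin_glb_lt; lra.
  - intros p Hp. destruct (M0_dec p Hp) as [t [Ht [ -> | [ -> | [ -> | -> ]]]]].
    + eapply Rle_trans; [|apply (H0 t Ht)]. eapply Rle_trans; apply Rmin_l.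
    + eapply Rle_trans; [|apply (H1 t Ht)]. eapply Rle_trans; [apply Rmin_l|apply Rmin_r].
    + eapply Rle_trans; [|apply (H2 t Ht)]. eapply Rle_trans; [apply Rmin_r|apply Rmin_l].
    + eapply Rle_trans; [|apply (H3 t Ht)]. eapply Rle_trans; apply Rmin_r.
Qed.

End Bnd.

Section Pos.
Variable X : SqMS.
Notation d := (Defs.dist X).
Notation S := (sqS X).

Lemma pos_aux m x n y del : 0 < del -> ~ trel X (m, x) (n, y) ->
  ((forall p, M0 p -> del <= d x (S p)) \/ (forall p, M0 p -> del <= d (S p) y)) ->
  exists K, 0 < K /\ forall l : list (TP X), last l (m, x) = (n, y) -> K <= chain_cost X (m, x) l.
Proof.
  intros Hdel Hn Hb.
  assert (Hc : forall K l, K <= 2 -> 2 <= chain_cost X (m, x) l -> K <= chain_cost X (m, x) l)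
    by (intros; lra).
  assert (HB : forall p q K, M0 p -> M0 q -> K <= del / 3 ->
     K <= d x (S p) / 3 + L1 m p n q + d (S q) y / 3).
  { intros p q K Hp Hq HK. pose proof (L1_nonneg m p n q).
    pose proof (d_nonneg X x (S p)). pose proof (d_nonneg X (S q) y).
    destruct Hb as [Hb|Hb]; [specialize (Hb p Hp)|specialize (Hb q Hq)]; lra. }
  destruct (N_eq_dec m n) as [<-|Hmn].
  - assert (Hxy : x <> y) by (intros ->; apply Hn, rst_refl).
    assert (Hd : 0 < d x y).
    { pose proof (d_nonneg X x y). destruct (Req_dec (d x y) 0) as [Z|Z]; [|lra].
      apply d_eq0 in Z; contradiction. }
    exists (Rmin 2 (Rmin (del / 3) (d x y / 3))). split.
    { repeat apply Rmin_glb_lt; lra. }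
    intros l E. destruct (Rlt_le_dec (chain_cost X (m, x) l) 2) as [Hl|Hl];
      [|apply Hc; auto; apply Rmin_l].
    destruct (chain_lb X l _ Hl) as [[Ef Ed] | (p & q & Hp & Hq & Hle)]; rewrite E in *; simpl in *.
    + eapply Rle_trans; [|apply Ed]. eapply Rle_trans; apply Rmin_r.
    + eapply Rle_trans; [|apply Hle]. apply HB; auto.
      eapply Rle_trans; [apply Rmin_r|apply Rmin_l].
  - exists (Rmin 2 (del / 3)). split.
    { repeat apply Rmin_glb_lt; lra. }
    intros l E. destruct (Rlt_le_dec (chain_cost X (m, x) l) 2) as [Hl|Hl];
      [|apply Hc; auto; apply Rmin_l].
    destruct (chain_lb X l _ Hl) as [[Ef Ed] | (p & q & Hp & Hq & Hle)]; rewrite E in *; simpl in *.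
    + contradiction.
    + eapply Rle_trans; [|apply Hle]. apply HB; auto. apply Rmin_r.
Qed.

Lemma tdist_zero a b : tdist X a b = 0 -> trel X a b.
Proof.
  intros Hz. destruct (classic (trel X a b)) as [H|Hn]; auto. exfalso.
  destruct a as [m x], b as [n y].
  assert (Key : forall del, 0 < del ->
     ((forall p, M0 p -> del <= d x (S p)) \/ (forall p, M0 p -> del <= d (S p) y)) -> False).
  { intros del Hdel Hb. destruct (pos_aux m x n y del Hdel Hn Hb) as [K [HK HL]].
    pose proof (tdist_ge X _ _ K HL). lra. }
  destruct (bnd X x) as [[p0 [Hp0 ->]] | [dx [Hdx Bx]]]; [|apply (Key dx); auto].
  destruct (bnd X y) as [[q0 [Hq0 ->]] | [dy [Hdy By]]].
  - pose proof (pos_lb X m n p0 q0 Hp0 Hq0). pose proof (L1_nonneg m p0 n q0).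
    assert (Z : L1 m p0 n q0 = 0) by lra. apply L1_zero in Z. apply Hn, glue; tauto.
  - apply (Key dy); auto. right. intros p Hp. rewrite d_sym; auto.
Qed.

End Pos.

Lemma M0_mk a b : 0 <= a <= 1 -> 0 <= b <= 1 -> (a = 0 \/ a = 1 \/ b = 0 \/ b = 1) -> M0 (a, b).
Proof. intros; unfold M0; simpl; tauto. Qed.

Lemma resc_M0 p n : M0 p -> in_cell n p -> M0 (rescale n p).
Proof.
  destruct p as [a b]. unfold M0, in_cell, rescale; simpl.
  pose proof (vt_range (fst n)). pose proof (vt_range (snd n)). unfold vN1, vN2.
  intros (Ha & Hb & Hd) (H1 & H2). repeat split; try lra.
Qed.

Lemma cellN_in p : 0 <= fst p <= 1 -> 0 <= snd p <= 1 -> in_cell (cellN p) p.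
Proof. intros. unfold in_cell, cellN, cell3, vN1, vN2; simpl.
  split; repeat destruct Rle_dec; simpl; lra. Qed.

Lemma P_resc n p : P1 n (rescale n p) = fst p /\ P2 n (rescale n p) = snd p.
Proof. unfold P1, P2, rescale; simpl; split; field. Qed.

Lemma tS_M0 p : M0 p -> M0 (rescale (cellN p) p).
Proof. intros Hp. apply resc_M0; auto. apply M0_range in Hp. apply cellN_in; tauto. Qed.

Section Final.
Variable X : SqMS.
Notation d := (Defs.dist X).
Notation S := (sqS X).

Lemma cell_indep p n : M0 p -> in_cell n p -> trel X (tS X p) (n, S (rescale n p)).
Proof. intros Hp Hn. unfold tS. apply glue.
  - apply tS_M0; auto.
  - apply resc_M0; auto.
  - rewrite !(proj1 (P_resc _ _)); auto.
  - rewrite !(proj2 (P_resc _ _)); auto.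
Qed.

Lemma tS_lb p q : M0 p -> M0 q ->
  Rabs (fst p - fst q) + Rabs (snd p - snd q) <= tdist X (tS X p) (tS X q).
Proof. intros Hp Hq. unfold tS at 1 2.
  pose proof (pos_lb X (cellN p) (cellN q) _ _ (tS_M0 p Hp) (tS_M0 q Hq)) as H.
  unfold L1 in H. rewrite !(proj1 (P_resc _ _)), !(proj2 (P_resc _ _)) in H. exact H. Qed.

Lemma seg_gen n p q : M0 p -> M0 q -> in_cell n p -> in_cell n q ->
  tdist X (tS X p) (tS X q) <= d (S (rescale n p)) (S (rescale n q)) / 3.
Proof. intros Hp Hq Hnp Hnq.
  rewrite (tdist_wd X _ _ _ _ (cell_indep p n Hp Hnp) (cell_indep q n Hq Hnq)).
  eapply Rle_trans; [apply tdist_le_base|]. unfold base_d; simpl.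
  destruct N_eq_dec; [lra|congruence]. Qed.

Lemma seg i r s t : (i = 0 \/ i = 1) -> 0 <= r <= s -> s <= 1 -> vt t / 3 <= r -> s <= (vt t + 1) / 3 ->
  tdist X (tS X (i, r)) (tS X (i, s)) <= s - r /\ tdist X (tS X (r, i)) (tS X (s, i)) <= s - r.
Proof.
  intros Hi Hrs Hs1 Ht1 Ht2. pose proof (vt_range t).
  assert (Hr1 : 0 <= r <= 1) by lra. assert (Hs : 0 <= s <= 1) by lra.
  assert (Hc0 : exists c, (3 * i - vt c = 0 \/ 3 * i - vt c = 1) /\ vt c / 3 <= i <= (vt c + 1) / 3).
  { destruct Hi as [ -> | -> ]; [exists t0|exists t2]; simpl; split.
    - left; lra.
    - lra.
    - right; lra.
    - lra. }
  destruct Hc0 as [c [Hc Cc]].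
  assert (Hi01 : 0 <= i <= 1) by (destruct Hi; lra).
  split.
  - assert (H1 := seg_gen (c, t) (i, r) (i, s)).
    unfold rescale, in_cell, vN1, vN2 in H1; simpl in H1.
    destruct (sq1X X (3 * i - vt c) (3 * r - vt t) (3 * s - vt t)) as [A _]; try lra; auto.
    rewrite A in H1. rewrite Rabs_right in H1 by lra.
    assert (tdist X (tS X (i, r)) (tS X (i, s)) <= (3 * s - vt t - (3 * r - vt t)) / 3).
    { apply H1; try (apply M0_mk; tauto); split; lra. }
    lra.
  - assert (H1 := seg_gen (t, c) (r, i) (s, i)).
    unfold rescale, in_cell, vN1, vN2 in H1; simpl in H1.
    destruct (sq1X X (3 * i - vt c) (3 * r - vt t) (3 * s - vt t)) as [_ A]; try lra; auto.
    rewrite A in H1. rewrite Rabs_right in H1 by lra.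
    assert (tdist X (tS X (r, i)) (tS X (s, i)) <= (3 * s - vt t - (3 * r - vt t)) / 3).
    { apply H1; try (apply M0_mk; tauto); split; lra. }
    lra.
Qed.

End Final.

Section Final2.
Variable X : SqMS.
Notation d := (Defs.dist X).
Notation S := (sqS X).

Lemma up i r s : (i = 0 \/ i = 1) -> 0 <= r <= s -> s <= 1 ->
  tdist X (tS X (i, r)) (tS X (i, s)) <= s - r /\ tdist X (tS X (r, i)) (tS X (s, i)) <= s - r.
Proof.
  intros Hi Hr Hs.
  destruct (Rle_dec s (1/3)).
  { apply (seg X i r s t0); simpl; auto; lra. }
  destruct (Rle_dec r (1/3)).
  - destruct (Rle_dec s (2/3)).
    + destruct (seg X i r (1/3) t0) as [A1 B1]; simpl; auto; try lra.
      destruct (seg X i (1/3) s t1) as [A2 B2]; simpl; auto; try lra.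
      pose proof (tdist_tri X (tS X (i, r)) (tS X (i, 1/3)) (tS X (i, s))).
      pose proof (tdist_tri X (tS X (r, i)) (tS X (1/3, i)) (tS X (s, i))).
      split; lra.
    + destruct (seg X i r (1/3) t0) as [A1 B1]; simpl; auto; try lra.
      destruct (seg X i (1/3) (2/3) t1) as [A2 B2]; simpl; auto; try lra.
      destruct (seg X i (2/3) s t2) as [A3 B3]; simpl; auto; try lra.
      pose proof (tdist_tri X (tS X (i, r)) (tS X (i, 1/3)) (tS X (i, s))).
      pose proof (tdist_tri X (tS X (r, i)) (tS X (1/3, i)) (tS X (s, i))).
      pose proof (tdist_tri X (tS X (i, 1/3)) (tS X (i, 2/3)) (tS X (i, s))).
      pose proof (tdist_tri X (tS X (1/3, i)) (tS X (2/3, i)) (tS X (s, i))).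
      split; lra.
  - destruct (Rle_dec r (2/3)).
    + destruct (Rle_dec s (2/3)).
      { apply (seg X i r s t1); simpl; auto; lra. }
      destruct (seg X i r (2/3) t1) as [A1 B1]; simpl; auto; try lra.
      destruct (seg X i (2/3) s t2) as [A2 B2]; simpl; auto; try lra.
      pose proof (tdist_tri X (tS X (i, r)) (tS X (i, 2/3)) (tS X (i, s))).
      pose proof (tdist_tri X (tS X (r, i)) (tS X (2/3, i)) (tS X (s, i))).
      split; lra.
    + apply (seg X i r s t2); simpl; auto; lra.
Qed.

Lemma sq1T i r s : (i = 0 \/ i = 1) -> 0 <= r <= 1 -> 0 <= s <= 1 ->
  tdist X (tS X (i, r)) (tS X (i, s)) = Rabs (s - r) /\
  tdist X (tS X (r, i)) (tS X (s, i)) = Rabs (s - r).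
Proof.
  intros Hi Hr Hs.
  assert (Hi01 : 0 <= i <= 1) by (destruct Hi; lra).
  assert (M1 : M0 (i, r)) by (apply M0_mk; tauto).
  assert (M2 : M0 (i, s)) by (apply M0_mk; tauto).
  assert (M3 : M0 (r, i)) by (apply M0_mk; tauto).
  assert (M4 : M0 (s, i)) by (apply M0_mk; tauto).
  pose proof (tS_lb X _ _ M1 M2) as L1'. pose proof (tS_lb X _ _ M3 M4) as L2'. simpl in L1', L2'.
  rewrite Rminus_diag, Rabs_R0, Rabs_minus_sym in L1', L2'.
  destruct (Rle_dec r s).
  - destruct (up i r s) as [A B]; auto; try lra.
    rewrite Rabs_right by lra. rewrite Rabs_right in L1', L2' by lra. split; lra.
  - destruct (up i s r) as [A B]; auto; try lra.
    rewrite tdist_sym in A, B.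
    rewrite Rabs_left by lra. rewrite Rabs_left in L1', L2' by lra. split; lra.
Qed.

Lemma tS_inj p q : M0 p -> M0 q -> trel X (tS X p) (tS X q) -> p = q.
Proof.
  intros Hp Hq H.
  destruct (P_resc (cellN p) p) as [A1 A2]. destruct (P_resc (cellN q) q) as [B1 B2].
  destruct (trel_inv X _ _ H) as [E|(m & n & p' & q' & Hp' & Hq' & E1 & E2 & F1 & F2)].
  - assert (Ec : cellN p = cellN q) by exact (f_equal fst E).
    assert (Es : S (rescale (cellN p) p) = S (rescale (cellN q) q)) by exact (f_equal snd E).
    apply S_inj in Es; try apply tS_M0; auto.
    rewrite Es in A1, A2. rewrite Ec in A1, A2. destruct p, q; simpl in *; f_equal; congruence.
  - assert (Ec1 : cellN p = m) by exact (f_equal fst E1).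
    assert (Es1 : S (rescale (cellN p) p) = S p') by exact (f_equal snd E1).
    assert (Ec2 : cellN q = n) by exact (f_equal fst E2).
    assert (Es2 : S (rescale (cellN q) q) = S q') by exact (f_equal snd E2).
    apply S_inj in Es1; try apply tS_M0; auto. apply S_inj in Es2; try apply tS_M0; auto.
    rewrite Es1 in A1, A2. rewrite Ec1 in A1, A2. rewrite Es2 in B1, B2. rewrite Ec2 in B1, B2.
    destruct p, q; simpl in *; f_equal; congruence.
Qed.

Lemma tS_sq : is_square_metric (trel X) (tdist X) (tS X).
Proof.
  split; [|split; [|split; [|split]]].
  - split; [|split; [|split; [|split]]].
    + intros; apply tdist_wd; auto.
    + apply tdist_nonneg.
    + intros a b; split; [apply tdist_zero|apply tdist_trel].
    + apply tdist_sym.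
    + apply tdist_tri.
  - apply tdist_le2.
  - apply tS_inj.
  - apply sq1T.
  - intros r s t u H1 H2. apply Rle_ge. apply (tS_lb X (r, s) (t, u)); auto.
Qed.

End Final2.

Lemma tmap_trel (X Y : SqMS) (f : car X -> car Y) : is_morphism X Y f ->
  forall a b, trel X a b -> trel Y (tmap f a) (tmap f b).
Proof.
  intros [_ [_ Hf]] a b H. induction H as [a b H|a|a b H IH|a b c H1 IH1 H2 IH2].
  - destruct H as (m & n & p & q & Hp & Hq & Ha & -> & -> & E1 & E2).
    unfold tmap; simpl. rewrite (Hf p Hp), (Hf q Hq). apply rst_step.
    exists m, n, p, q. tauto.
  - apply rst_refl.
  - apply rst_sym; auto.
  - eapply rst_trans; eauto.
Qed.

Lemma tmap_short (X Y : SqMS) (f : car X -> car Y) : is_morphism X Y f ->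
  forall a b, tdist Y (tmap f a) (tmap f b) <= tdist X a b.
Proof.
  intros Hm a b. apply tdist_ge. intros l E.
  assert (Hs : forall x y, step_cost Y (tmap f x) (tmap f y) <= step_cost X x y).
  { intros x y. unfold step_cost at 2.
    destruct excluded_middle_informative as [Ht|Ht].
    - rewrite step_trel; [lra|]. apply tmap_trel; auto.
    - eapply Rle_trans; [apply step_le_base|]. unfold base_d, tmap; simpl.
      destruct (N_eq_dec (fst x) (fst y)); [|lra].
      destruct Hm as [_ [Hd _]]. specialize (Hd (snd x) (snd y)). lra. }
  assert (Hc : forall l a, chain_cost Y (tmap f a) (map (tmap f) l) <= chain_cost X a l).
  { induction l0 as [|x l0 IH]; intros a0; simpl; [lra|].
    specialize (IH x). specialize (Hs a0 x). lra. }
  eapply Rle_trans; [|apply Hc]. apply tdist_le.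
  rewrite <- E. clear. revert a. induction l as [|x l IH]; intros a; [reflexivity|].
  change (map (tmap f) (x :: l)) with (tmap f x :: map (tmap f) l).
  rewrite !last_cons. apply IH.
Qed.

Theorem mainTheorem11 :
  (forall X : SqMS,
     is_square_metric (trel X) (tdist X) (tS X) /\
     (forall (p : R * R) (n : NN), M0 p -> in_cell n p ->
        trel X (tS X p) (n, sqS X (rescale n p)))) /\
  (forall (X Y : SqMS) (f : car X -> car Y), is_morphism X Y f ->
     is_morphism_on (trel X) (trel Y) (tdist X) (tdist Y) (tS X) (tS Y)
       (tmap f)) /\
  (forall (X : SqMS) (a : TP X), trel X (tmap (fun x : car X => x) a) a) /\
  (forall (X Y Z : SqMS) (f : car X -> car Y) (g : car Y -> car Z),
     is_morphism X Y f -> is_morphism Y Z g ->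
     forall a : TP X, trel Z (tmap (fun x => g (f x)) a) (tmap g (tmap f a))).
Proof.
  split; [|split; [|split]].
  - intros X. split; [apply tS_sq|]. intros p n Hp Hn. apply cell_indep; auto.
  - intros X Y f Hf. split; [|split].
    + apply tmap_trel; auto.
    + apply tmap_short; auto.
    + intros p Hp. unfold tS, tmap; simpl. destruct Hf as [_ [_ Hf]].
      rewrite Hf by (apply tS_M0; auto). apply rst_refl.
  - intros X [n x]. apply rst_refl.
  - intros. apply rst_refl.
Qed.
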